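(* Let $S=(s_{jl})\in\mathbb{C}^{4\times4}$ be Hermitian and $\varepsilon\in\{1,-1\}$. If $\max\{p(\theta_1,\theta_2)^2-q(\theta_1,\theta_2):\theta_1,\theta_2\in(-\pi,\pi]\}=0$, then $S$ is diagonal, $S=\operatorname{diag}(s_{11},s_{22},s_{33},s_{44})$, and $s_{11}+s_{22}-s_{33}-s_{44}=0$.
   Context: Let $S=(s_{jl})_{j,l=1}^4$ be a Hermitian $4\times4$ complex matrix (so $s_{jj}\in\mathbb{R}$ and $s_{lj}=\overline{s_{jl}}$) and $\varepsilon\in\{1,-1\}$. For $\theta_1,\theta_2\in\mathbb{R}$ define $$p=-\tfrac12\Big[s_{11}+s_{22}+s_{33}+s_{44}+2\varepsilon\operatorname{Re}(s_{12}\mathrm{e}^{i\theta_1})+2\varepsilon\operatorname{Re}(s_{34}\mathrm{e}^{i\theta_2})\Big],$$ $$\begin{aligned}q={}&-\big(|s_{13}|^2-s_{11}s_{33}+|s_{14}|^2-s_{11}s_{44}+|s_{23}|^2-s_{22}s_{33}+|s_{24}|^2-s_{22}s_{44}\big)\\&-2\varepsilon\Big[-(s_{33}+s_{44})\operatorname{Re}(s_{12}\mathrm{e}^{i\theta_1})+\operatorname{Re}\big((s_{13}\overline{s_{23}}+s_{14}\overline{s_{24}})\mathrm{e}^{i\theta_1}\big)\\&\qquad-(s_{11}+s_{22})\operatorname{Re}(s_{34}\mathrm{e}^{i\theta_2})+\operatorname{Re}\big((\overline{s_{13}}s_{14}+\overline{s_{23}}s_{24})\mathrm{e}^{i\theta_2}\big)\Big]\\&-2\operatorname{Re}\big((s_{14}\overline{s_{23}}-s_{12}s_{34})\mathrm{e}^{i(\theta_1+\theta_2)}\big)-2\operatorname{Re}\big((s_{13}\overline{s_{24}}-s_{12}\overline{s_{34}})\mathrm{e}^{i(\theta_1-\theta_2)}\big).\end{aligned}$$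 *)

(* Defs.v *)
From Stdlib Require Import Reals.
Open Scope R_scope.

Definition C : Type := (R * R)%type.
Definition Cre (z : C) : R := fst z.
Definition Cim (z : C) : R := snd z.
Definition C0 : C := (0, 0).
Definition Cadd (z w : C) : C := (fst z + fst w, snd z + snd w).
Definition Csub (z w : C) : C := (fst z - fst w, snd z - snd w).
Definition Cmul (z w : C) : C :=
  (fst z * fst w - snd z * snd w, fst z * snd w + snd z * fst w).
Definition Cconj (z : C) : C := (fst z, - snd z).
Definition Cnorm2 (z : C) : R := fst z * fst z + snd z * snd z.
Definition Cexpi (t : R) : C := (cos t, sin t).

(* A 4x4 complex matrix, entries S j l for j, l in {1,2,3,4}. *)
Definition Mat4 : Type := nat -> nat -> C.

Definition Hermitian4 (S : Mat4) : Prop :=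
  forall j l, (1 <= j <= 4)%nat -> (1 <= l <= 4)%nat -> S l j = Cconj (S j l).

Definition ReE (z : C) (t : R) : R := Cre (Cmul z (Cexpi t)).

Definition p_fun (S : Mat4) (eps t1 t2 : R) : R :=
  - / 2 * (Cre (S 1%nat 1%nat) + Cre (S 2%nat 2%nat) + Cre (S 3%nat 3%nat)
           + Cre (S 4%nat 4%nat)
           + 2 * eps * ReE (S 1%nat 2%nat) t1 + 2 * eps * ReE (S 3%nat 4%nat) t2).

Definition q_fun (S : Mat4) (eps t1 t2 : R) : R :=
  let s := fun j l : nat => S j l in
  let d := fun j : nat => Cre (S j j) in
  - (Cnorm2 (s 1 3)%nat - d 1%nat * d 3%nat + Cnorm2 (s 1 4)%nat - d 1%nat * d 4%nat
     + Cnorm2 (s 2 3)%nat - d 2%nat * d 3%nat + Cnorm2 (s 2 4)%nat - d 2%nat * d 4%nat)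
  - 2 * eps *
    ( - (d 3%nat + d 4%nat) * ReE (s 1 2)%nat t1
      + ReE (Cadd (Cmul (s 1 3)%nat (Cconj (s 2 3)%nat))
                  (Cmul (s 1 4)%nat (Cconj (s 2 4)%nat))) t1
      - (d 1%nat + d 2%nat) * ReE (s 3 4)%nat t2
      + ReE (Cadd (Cmul (Cconj (s 1 3)%nat) (s 1 4)%nat)
                  (Cmul (Cconj (s 2 3)%nat) (s 2 4)%nat)) t2)
  - 2 * ReE (Csub (Cmul (s 1 4)%nat (Cconj (s 2 3)%nat)) (Cmul (s 1 2)%nat (s 3 4)%nat))
            (t1 + t2)
  - 2 * ReE (Csub (Cmul (s 1 3)%nat (Cconj (s 2 4)%nat))
                  (Cmul (s 1 2)%nat (Cconj (s 3 4)%nat)))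
            (t1 - t2).

Definition f_fun (S : Mat4) (eps t1 t2 : R) : R :=
  p_fun S eps t1 t2 ^ 2 - q_fun S eps t1 t2.

Definition in_period (t : R) : Prop := - PI < t <= PI.

Definition max_is_zero (S : Mat4) (eps : R) : Prop :=
  (forall t1 t2, in_period t1 -> in_period t2 -> f_fun S eps t1 t2 <= 0) /\
  (exists t1 t2, in_period t1 /\ in_period t2 /\ f_fun S eps t1 t2 = 0).

(* Main.v *)
Require Import Defs.
From Stdlib Require Import Reals Lra Psatz.
Open Scope R_scope.

Definition ReE' (z : Defs.C) (c s : R) : R := Cre (Cmul z (c, s)).

Definition Ff (S : Mat4) (eps c1 s1 c2 s2 : R) : R :=
  let cp := c1 * c2 - s1 * s2 in let sp := s1 * c2 + c1 * s2 in
  let cm := c1 * c2 + s1 * s2 in let sm := s1 * c2 - c1 * s2 in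
  let s := fun j l : nat => S j l in
  let d := fun j : nat => Cre (S j j) in
  (- / 2 * (Cre (S 1%nat 1%nat) + Cre (S 2%nat 2%nat) + Cre (S 3%nat 3%nat)
           + Cre (S 4%nat 4%nat)
           + 2 * eps * ReE' (S 1%nat 2%nat) c1 s1 + 2 * eps * ReE' (S 3%nat 4%nat) c2 s2)) ^ 2
  - (- (Cnorm2 (s 1 3)%nat - d 1%nat * d 3%nat + Cnorm2 (s 1 4)%nat - d 1%nat * d 4%nat
     + Cnorm2 (s 2 3)%nat - d 2%nat * d 3%nat + Cnorm2 (s 2 4)%nat - d 2%nat * d 4%nat)
  - 2 * eps *
    ( - (d 3%nat + d 4%nat) * ReE' (s 1 2)%nat c1 s1
      + ReE' (Cadd (Cmul (s 1 3)%nat (Cconj (s 2 3)%nat))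
                  (Cmul (s 1 4)%nat (Cconj (s 2 4)%nat))) c1 s1
      - (d 1%nat + d 2%nat) * ReE' (s 3 4)%nat c2 s2
      + ReE' (Cadd (Cmul (Cconj (s 1 3)%nat) (s 1 4)%nat)
                  (Cmul (Cconj (s 2 3)%nat) (s 2 4)%nat)) c2 s2)
  - 2 * ReE' (Csub (Cmul (s 1 4)%nat (Cconj (s 2 3)%nat)) (Cmul (s 1 2)%nat (s 3 4)%nat))
            cp sp
  - 2 * ReE' (Csub (Cmul (s 1 3)%nat (Cconj (s 2 4)%nat))
                  (Cmul (s 1 2)%nat (Cconj (s 3 4)%nat)))
            cm sm).

Lemma f_Ff S eps t1 t2 : f_fun S eps t1 t2 = Ff S eps (cos t1) (sin t1) (cos t2) (sin t2).
Proof.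
  unfold f_fun, Ff, p_fun, q_fun, ReE, ReE', Cexpi.
  rewrite cos_plus, sin_plus, cos_minus, sin_minus. reflexivity.
Qed.

Definition bval (S : Mat4) (eps c1 s1 c2 s2 : R) : Defs.C :=
  Cadd (Cadd (S 1%nat 3%nat) (Cmul (eps * c2, eps * s2) (S 1%nat 4%nat)))
       (Cadd (Cmul (eps * c1, - (eps * s1)) (S 2%nat 3%nat))
             (Cmul (Cmul (c2, s2) (c1, - s1)) (S 2%nat 4%nat))).

Definition Aval (S : Mat4) (eps c1 s1 c2 s2 : R) : R :=
  ((Cre (S 1%nat 1%nat) + Cre (S 2%nat 2%nat) + 2 * eps * ReE' (S 1%nat 2%nat) c1 s1)
   - (Cre (S 3%nat 3%nat) + Cre (S 4%nat 4%nat) + 2 * eps * ReE' (S 3%nat 4%nat) c2 s2)) / 2.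

Lemma point S eps c1 s1 c2 s2 :
  (eps = 1 \/ eps = -1) ->
  (c1 = 1 /\ s1 = 0 \/ c1 = -1 /\ s1 = 0 \/ c1 = 0 /\ s1 = 1) ->
  (c2 = 1 /\ s2 = 0 \/ c2 = -1 /\ s2 = 0 \/ c2 = 0 /\ s2 = 1) ->
  Ff S eps c1 s1 c2 s2 <= 0 ->
  Aval S eps c1 s1 c2 s2 = 0 /\ fst (bval S eps c1 s1 c2 s2) = 0
  /\ snd (bval S eps c1 s1 c2 s2) = 0.
Proof.
  intros He H1 H2 Hle.
  assert (E : Ff S eps c1 s1 c2 s2 = Aval S eps c1 s1 c2 s2 ^ 2
     + fst (bval S eps c1 s1 c2 s2) ^ 2 + snd (bval S eps c1 s1 c2 s2) ^ 2).
  { unfold Ff, Aval, bval, ReE', Cre, Cmul, Cadd, Csub, Cconj, Cnorm2; cbn [fst snd].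
    destruct He as [-> | ->];
    destruct H1 as [[-> ->]|[[-> ->]|[-> ->]]];
    destruct H2 as [[-> ->]|[[-> ->]|[-> ->]]]; field. }
  rewrite E in Hle.
  set (A := Aval S eps c1 s1 c2 s2) in *.
  set (B := fst (bval S eps c1 s1 c2 s2)) in *.
  set (D := snd (bval S eps c1 s1 c2 s2)) in *.
  assert (A * A = 0 /\ B * B = 0 /\ D * D = 0) as [h1 [h2 h3]] by nra.
  repeat split; nra.
Qed.

Theorem mainTheorem12 (S : Mat4) (eps : R) :
  Hermitian4 S ->
  (eps = 1 \/ eps = -1) ->
  max_is_zero S eps ->
  (forall j l, (1 <= j <= 4)%nat -> (1 <= l <= 4)%nat -> j <> l -> S j l = C0) /\
  Cre (S 1%nat 1%nat) + Cre (S 2%nat 2%nat) - Cre (S 3%nat 3%nat) - Cre (S 4%nat 4%nat) = 0.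
Proof.
  intros HH He [Hmax _].
  assert (HP := PI_RGT_0).
  assert (I0 : in_period 0) by (unfold in_period; lra).
  assert (IP : in_period PI) by (unfold in_period; lra).
  assert (I2 : in_period (PI/2)) by (unfold in_period; lra).
  assert (G : forall t1 t2, in_period t1 -> in_period t2 ->
     (cos t1 = 1 /\ sin t1 = 0 \/ cos t1 = -1 /\ sin t1 = 0 \/ cos t1 = 0 /\ sin t1 = 1) ->
     (cos t2 = 1 /\ sin t2 = 0 \/ cos t2 = -1 /\ sin t2 = 0 \/ cos t2 = 0 /\ sin t2 = 1) ->
     Aval S eps (cos t1) (sin t1) (cos t2) (sin t2) = 0 /\
     fst (bval S eps (cos t1) (sin t1) (cos t2) (sin t2)) = 0 /\
     snd (bval S eps (cos t1) (sin t1) (cos t2) (sin t2)) = 0).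
  { intros t1 t2 h1 h2 k1 k2. apply point; auto. rewrite <- f_Ff. auto. }
  assert (V0 : cos 0 = 1 /\ sin 0 = 0) by (rewrite cos_0, sin_0; auto).
  assert (VP : cos PI = -1 /\ sin PI = 0) by (rewrite cos_PI, sin_PI; auto).
  assert (V2 : cos (PI/2) = 0 /\ sin (PI/2) = 1) by (rewrite cos_PI2, sin_PI2; auto).
  pose proof (G 0 0 I0 I0 ltac:(auto) ltac:(auto)) as P1.
  pose proof (G PI 0 IP I0 ltac:(auto) ltac:(auto)) as P2.
  pose proof (G 0 PI I0 IP ltac:(auto) ltac:(auto)) as P3.
  pose proof (G PI PI IP IP ltac:(auto) ltac:(auto)) as P4.
  pose proof (G (PI/2) 0 I2 I0 ltac:(auto) ltac:(auto)) as P5.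
  pose proof (G 0 (PI/2) I0 I2 ltac:(auto) ltac:(auto)) as P6.
  destruct V0 as [c0 s0]; destruct VP as [cP sP]; destruct V2 as [c2 s2].
  rewrite ?c0, ?s0, ?cP, ?sP, ?c2, ?s2 in *.
  unfold Aval, bval, ReE', Cre, Cmul, Cadd in *; cbn [fst snd] in *.
  destruct (S 1%nat 2%nat) as [x12 y12] eqn:E12.
  destruct (S 1%nat 3%nat) as [x13 y13] eqn:E13.
  destruct (S 1%nat 4%nat) as [x14 y14] eqn:E14.
  destruct (S 2%nat 3%nat) as [x23 y23] eqn:E23.
  destruct (S 2%nat 4%nat) as [x24 y24] eqn:E24.
  destruct (S 3%nat 4%nat) as [x34 y34] eqn:E34.
  cbn [fst snd] in *.
  destruct He as [-> | ->];
  (assert (x12 = 0 /\ y12 = 0 /\ x34 = 0 /\ y34 = 0 /\ x13 = 0 /\ y13 = 0 /\ x14 = 0 /\ y14 = 0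
     /\ x23 = 0 /\ y23 = 0 /\ x24 = 0 /\ y24 = 0 /\
     fst (S 1%nat 1%nat) + fst (S 2%nat 2%nat) - fst (S 3%nat 3%nat) - fst (S 4%nat 4%nat) = 0)
     as (a1&a2&a3&a4&a5&a6&a7&a8&a9&a10&a11&a12&a13) by
   (destruct P1 as (?&?&?), P2 as (?&?&?), P3 as (?&?&?), P4 as (?&?&?),
      P5 as (?&?&?), P6 as (?&?&?); repeat split; lra));
  subst; split; auto;
  (assert (U : forall j l, (1 <= j <= 4)%nat -> (1 <= l <= 4)%nat -> (j < l)%nat -> S j l = C0)
   by (intros j l Hj Hl Hjl;
       destruct Hj as [Hj1 Hj2]; destruct Hl as [Hl1 Hl2];
       destruct j as [|[|[|[|[|j]]]]]; try lia;
       destruct l as [|[|[|[|[|l]]]]]; try lia; auto);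
   intros j l Hj Hl Hjl;
   destruct (proj1 (Nat.lt_gt_cases j l) Hjl) as [Hlt|Hlt];
   [ auto | rewrite HH by auto; rewrite U by (auto; lia); unfold Cconj, C0; cbn [fst snd]; f_equal; lra ]).
Qed.
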